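(* Let $n,m\ge 1$, $Q\in\mathbb{R}^{n\times n}$ symmetric positive definite, $A\in\mathbb{R}^{m\times n}$, $b\in\mathbb{R}^m$, $c\in\mathbb{R}^n$, and suppose the problem $$\min_{x\in\mathbb{R}^n}\ \tfrac12 x^\intercal Q x + c^\intercal x \quad\text{s.t.}\quad Ax\preceq b \qquad (P(Q,A,b,c))$$ is feasible, with (unique) optimal solution $x^\ast$. Let integers $0\le \bar m\le m$ and $0\le \bar n\le n$ be given and partition $$A=\begin{bmatrix} A_1\\ A_{21}\ \ A_{22}\end{bmatrix},\qquad A_1\in\mathbb{R}^{\bar m\times n},\ A_{21}\in\mathbb{R}^{(m-\bar m)\times \bar n},\ A_{22}\in\mathbb{R}^{(m-\bar m)\times(n-\bar n)}.$$ Consider an adversary (a coalition of the target node with some agents) that knows $Q$, $A$, $x^\ast$, the entries $b_1,\dots,b_{\bar m}$ and the entries $c_1,\dots,c_{\bar n}$. Then: (1) If $\bar m<m$ and there exists $\delta\in\mathbb{R}^{m-\bar m}$ with $\delta\neq 0$, $\delta\succeq 0$ and $A_{21}^\intercal\delta=0$, then $b$ cannot be uniquely retrieved by the adversary: there exist $b'\in\mathbb{R}^m$ with $b'\neq b$ and $c'\in\mathbb{R}^n$ such that $b'_j=b_j$ for all $j\le\bar m$, $c'_j=c_j$ for all $j\le \bar n$, and $x^\ast$ is the optimal solution of $P(Q,A,b',c')$. (2) If, in addition to the hypotheses of (1), $\bar n<n$ and $A_{22}^\intercal\delta\neq 0$, then $c$ cannot be uniquely retrieved by the adversary: there exist $c'\in\mathbb{R}^n$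 with $c'\neq c$ and $b'\in\mathbb{R}^m$ such that $b'_j=b_j$ for all $j\le\bar m$, $c'_j=c_j$ for all $j\le \bar n$, and $x^\ast$ is the optimal solution of $P(Q,A,b',c')$.
   Context: Vector inequalities $\preceq,\succeq$ are element-wise. The setting is a protocol that, given private data $b$ and $c$ held by agents and matrices $Q,A$ (here public), outputs the optimal solution $x^\ast$ of the quadratic program to a target node. Following the paper's notion of non-unique retrieval, a private input cannot be uniquely retrieved by an adversary if there are at least two values of it, each consistent (together with some values of the other unknown private data) with everything the adversary knows; here ''consistent'' means agreeing with the known entries and yielding the same optimal solution $x^\ast$. *)

(* Defs.v *)
From HB Require Import structures.
From mathcomp Require Import all_boot all_order all_algebra.
From mathcomp Require Import reals.
Set Implicit Arguments. Unset Strict Implicit. Unset Printing Implicit Defensive.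
Import Order.TTheory GRing.Theory Num.Theory.
Local Open Scope ring_scope.

Definition sym_posdef (R : realType) (n : nat) (Q : 'M[R]_n) : Prop :=
  Q^T = Q /\ forall x : 'cV[R]_n, x != 0 -> 0 < (x^T *m Q *m x) 0 0.

Definition qp_obj (R : realType) (n : nat) (Q : 'M[R]_n) (c x : 'cV[R]_n) : R :=
  (x^T *m Q *m x) 0 0 / 2 + (c^T *m x) 0 0.

Definition qp_feasible (R : realType) (m n : nat) (A : 'M[R]_(m, n))
  (b : 'cV[R]_m) (x : 'cV[R]_n) : Prop :=
  forall i : 'I_m, (A *m x) i 0 <= b i 0.

Definition qp_optimal (R : realType) (m n : nat) (Q : 'M[R]_n) (A : 'M[R]_(m, n))
  (b : 'cV[R]_m) (c : 'cV[R]_n) (x : 'cV[R]_n) : Prop :=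
  qp_feasible A b x /\
  forall y : 'cV[R]_n, qp_feasible A b y -> qp_obj Q c x <= qp_obj Q c y.

(* Main.v *)
Require Import Defs.
From HB Require Import structures.
From mathcomp Require Import all_boot all_order all_algebra.
From mathcomp Require Import reals.
From mathcomp Require Import ring lra.
Import Order.TTheory GRing.Theory Num.Theory.
Local Open Scope ring_scope.

Set Implicit Arguments. Unset Strict Implicit.
Section Farkas.
Variables (R : realType) (n : nat).
Local Notation V := 'cV[R]_n.

Definition dot (u v : V) : R := (u^T *m v) 0 0.

Lemma dotE u v : dot u v = \sum_i u i 0 * v i 0.
Proof. by rewrite /dot !mxE; apply: eq_bigr => i _; rewrite mxE. Qed.

Lemma dotDl u v w : dot (u + v) w = dot u w + dot v w.
Proof. rewrite !dotE -big_split; apply: eq_bigr => i _; by rewrite !mxE mulrDl. Qed.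
Lemma dotZl k u w : dot (k *: u) w = k * dot u w.
Proof. rewrite !dotE mulr_sumr; apply: eq_bigr => i _; by rewrite !mxE mulrA. Qed.
Lemma dotC u v : dot u v = dot v u.
Proof. rewrite !dotE; apply: eq_bigr => i _; by rewrite mulrC. Qed.
Lemma dotDr u v w : dot w (u + v) = dot w u + dot w v.
Proof. by rewrite dotC dotDl !(dotC w). Qed.
Lemma dotZr k u w : dot w (k *: u) = k * dot w u.
Proof. by rewrite dotC dotZl dotC. Qed.
Lemma dotNl u w : dot (- u) w = - dot u w.
Proof. by rewrite -scaleN1r dotZl mulN1r. Qed.
Lemma dotBl u v w : dot (u - v) w = dot u w - dot v w.
Proof. by rewrite dotDl dotNl. Qed.
Lemma dotBr u v w : dot w (u - v) = dot w u - dot w v.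
Proof. by rewrite dotC dotBl !(dotC w). Qed.
Lemma dot0l w : dot 0 w = 0.
Proof. by rewrite -(scale0r 0) dotZl mul0r. Qed.

Lemma dot_gt0 u : u != 0 -> 0 < dot u u.
Proof.
move=> nz; rewrite dotE.
have [i ui] : exists i, u i 0 != 0.
  apply/existsP; apply: contraR nz => /existsPn H.
  apply/eqP/matrixP => i j; rewrite (ord1 j) mxE; exact/eqP/negPn/H.
rewrite (bigD1 i) //=.
have h1 : 0 < u i 0 * u i 0 by rewrite -expr2 lt_def sqr_ge0 andbT sqrf_eq0.
have h2 : 0 <= \sum_(j < n | j != i) u j 0 * u j 0.
  by apply: sumr_ge0 => j _; rewrite -expr2 sqr_ge0.
lra.
Qed.

Fixpoint incone (s : seq V) (g : V) : Prop :=
  match s with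
  | [::] => g = 0
  | a :: s' => exists t, 0 <= t /\ incone s' (g - t *: a)
  end.

Definition phi (a d x : V) : V := dot a d *: x - dot x d *: a.

Lemma phiD a d u v k : phi a d (u + k *: v) = phi a d u + k *: phi a d v.
Proof.
rewrite /phi dotDl dotZl; apply/matrixP => i j; rewrite !mxE.
set x := dot a d; set y := dot u d; set z := dot v d.
ring.
Qed.

Lemma phi0 a d : phi a d 0 = 0.
Proof. by rewrite /phi dot0l scale0r scaler0 subrr. Qed.

Lemma incone_map a d s y : incone (map (phi a d) s) y ->
  exists u, incone s u /\ y = phi a d u.
Proof.
elim: s y => [|b s IH] y /=; first by move=> ->; exists 0; rewrite phi0.
case=> t [t0 /IH [u [hu e]]]; exists (u + t *: b); split.
  by exists t; split => //; rewrite addrK.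
by rewrite phiD -e subrK.
Qed.

Lemma incone_dot s d u : (forall a, a \in s -> dot a d <= 0) ->
  incone s u -> dot u d <= 0.
Proof.
elim: s u => [|a s IH] u /= hs; first by move=> ->; rewrite dot0l.
case=> t [t0 hu]; have := IH _ (fun x hx => hs x (mem_behead (s:=a :: s) hx)) hu.
rewrite dotBl dotZl => h.
have ha := hs a (mem_head _ _).
have : t * dot a d <= 0 by rewrite mulr_ge0_le0.
lra.
Qed.

Lemma farkas_n N : forall s g, size s = N ->
  incone s g \/ exists d, (forall a, a \in s -> dot a d <= 0) /\ 0 < dot g d.
Proof.
elim: N => [|N IH] [|a s] g //=.
- move=> _; have [->|gnz] := eqVneq g 0; first by left.
  by right; exists g; split => //; exact: dot_gt0.
case=> sz.
have [h|[d [hd hg]]] := IH s g sz.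
  by left; exists 0; split => //; rewrite scale0r subr0.
have [had|had] := lerP (dot a d) 0.
  right; exists d; split => // x; rewrite inE => /orP[/eqP->//|]; exact: hd.
have sz' : size (map (phi a d) s) = N by rewrite size_map.
have [h|[d' [hd' hg']]] := IH _ (phi a d g) sz'.
  have [u [hu e]] := incone_map h.
  have hud := incone_dot hd hu.
  left; exists (dot (g - u) d / dot a d); split.
    by rewrite divr_ge0 // ?(ltW had) // dotBl; lra.
  suff -> : g - dot (g - u) d / dot a d *: a = u by [].
  have : phi a d (g - u) = 0.
    by rewrite -scaleN1r phiD -e scaleN1r subrr.
  rewrite /phi => /eqP; rewrite subr_eq0 => /eqP e2.
  apply: (@scalerI _ _ (dot a d)); first by rewrite gt_eqF.
  rewrite scalerBr scalerA mulrCA divff ?gt_eqF // mulr1 -e2.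
  by rewrite scalerBr opprB addrC subrK.
right; exists (d' - (dot a d' / dot a d) *: d).
have key x : dot x (d' - (dot a d' / dot a d) *: d) = dot (phi a d x) d' / dot a d.
  rewrite dotBr dotZr /phi dotBl !dotZl; field; by rewrite gt_eqF.
split.
  move=> x; rewrite inE key => /orP[/eqP->|hx].
    by rewrite /phi subrr dot0l mul0r.
  by rewrite pmulr_lle0 ?invr_gt0 // hd' // map_f.
by rewrite key divr_gt0.
Qed.

End Farkas.

Section KKT.
Variables (R : realType) (m n : nat) (Q : 'M[R]_n) (A : 'M[R]_(m, n)).

Definition rowv (i : 'I_m) : 'cV[R]_n := (row i A)^T.

Lemma dot_rowv i x : dot (rowv i) x = (A *m x) i 0.
Proof. by rewrite /dot /rowv trmxK -row_mul mxE. Qed.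

Lemma dot_At (lam : 'cV[R]_m) d : dot (A^T *m lam) d = \sum_i lam i 0 * (A *m d) i 0.
Proof.
rewrite /dot trmx_mul trmxK -mulmxA mxE; apply: eq_bigr => i _; by rewrite mxE.
Qed.

Lemma incone_lam (r : seq 'I_m) g : incone (map rowv r) g ->
  exists lam : 'cV[R]_m, (forall i, 0 <= lam i 0) /\
    (forall i, lam i 0 != 0 -> i \in r) /\ g = A^T *m lam.
Proof.
elim: r g => [|i r IH] g /=.
  move=> ->; exists 0; split => [i|]; first by rewrite mxE.
  by split => [i|]; rewrite ?mxE ?eqxx // mulmx0.
case=> t [t0 /IH [lam [l0 [lr e]]]].
exists (lam + t *: delta_mx i 0); split.
  move=> j; rewrite !mxE; apply: addr_ge0 => //; apply: mulr_ge0 => //.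
split.
  move=> j; rewrite !mxE inE; case: (eqVneq j i) => //= _; rewrite mulr0 addr0.
  exact: lr.
rewrite mulmxDr -scalemxAr -colE -tr_row -e.
by rewrite subrK.
Qed.

Lemma obj_expand c x d e : Q^T = Q ->
  qp_obj Q c (x + e *: d) = qp_obj Q c x + e * dot (Q *m x + c) d
     + e ^+ 2 / 2 * (d^T *m Q *m d) 0 0.
Proof.
move=> hQ.
have sym : (d^T *m Q *m x) 0 0 = (x^T *m Q *m d) 0 0.
  have : (d^T *m Q *m x)^T = x^T *m Q *m d by rewrite !trmx_mul trmxK hQ mulmxA.
  by move=> <-; rewrite [RHS]mxE.
have tD : (x + e *: d)^T = x^T + e *: d^T by apply/matrixP=> i j; rewrite !mxE.
have tD2 : (Q *m x + c)^T = x^T *m Q + c^T.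
  have trD p q (M N : 'M[R]_(p, q)) : (M + N)^T = M^T + N^T.
    by apply/matrixP=> i j; rewrite !mxE.
  by rewrite trD trmx_mul hQ.
rewrite /qp_obj /dot tD2 tD !mulmxDl !mulmxDr.
rewrite -!scalemxAl -!scalemxAr !scalerA.
set a1 := (x^T *m Q *m x). set a2 := (x^T *m Q *m d).
set a3 := (d^T *m Q *m x).
set a4 := (d^T *m Q *m d). set c1 := (c^T *m x). set c2 := (c^T *m d).
move: sym; rewrite !mxE => ->.
by field.
Qed.

Lemma psd (d : 'cV[R]_n) : sym_posdef Q -> 0 <= (d^T *m Q *m d) 0 0.
Proof.
case=> _ pd; case: (eqVneq d 0) => [->|nz]; last exact/ltW/pd.
by rewrite mulmx0 mxE.
Qed.

Lemma AmxB (u v : 'cV[R]_n) i : (A *m (u - v)) i 0 = (A *m u) i 0 - (A *m v) i 0.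
Proof. by rewrite mulmxBr !mxE. Qed.

Lemma AmxDZ (u v : 'cV[R]_n) e i : (A *m (u + e *: v)) i 0 = (A *m u) i 0 + e * (A *m v) i 0.
Proof. by rewrite mulmxDr -scalemxAr !mxE. Qed.

Lemma kkt_suff b c xs (lam : 'cV[R]_m) : sym_posdef Q -> qp_feasible A b xs ->
  (forall i, 0 <= lam i 0) -> (forall i, lam i 0 != 0 -> (A *m xs) i 0 = b i 0) ->
  Q *m xs + c + A^T *m lam = 0 -> qp_optimal Q A b c xs.
Proof.
move=> hQ fx l0 cs st; split => // y fy.
have -> : y = xs + 1 *: (y - xs) by rewrite scale1r addrC subrK.
rewrite obj_expand; last by case: hQ.
have -> : Q *m xs + c = - (A^T *m lam) by rewrite -(addrK (A^T *m lam) (Q *m xs + c)) st sub0r.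
rewrite dotNl dot_At.
have s0 : \sum_i lam i 0 * (A *m (y - xs)) i 0 <= 0.
  apply: sumr_le0 => i _; rewrite AmxB.
  case: (eqVneq (lam i 0) 0) => [->|nz]; first by rewrite mul0r.
  rewrite (cs i nz); apply: mulr_ge0_le0 => //; rewrite subr_le0; exact: fy.
have q0 := psd (y - xs) hQ.
rewrite expr1n mul1r mul1r; lra.
Qed.

Lemma min_pos (T : finType) (h : T -> R) h0 : 0 < h0 -> (forall i, 0 < h i) ->
  exists e, [/\ 0 < e, e <= h0 & forall i, e <= h i].
Proof.
move=> p0 ph.
have H : forall s : seq T, exists e, [/\ 0 < e, e <= h0 & forall i, i \in s -> e <= h i].
  elim => [|a s [e [e0 eh ei]]]; first by exists h0.
  exists (Order.min e (h a)); split.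
  - by rewrite lt_min e0 ph.
  - by rewrite ge_min eh.
  - move=> i; rewrite inE => /orP[/eqP->|hi]; rewrite ge_min ?lexx ?orbT //.
    by rewrite ei.
have [e [e0 eh ei]] := H (enum T).
by exists e; split => // i; apply: ei; rewrite mem_enum.
Qed.

Lemma kkt_nec b c xs : sym_posdef Q -> qp_optimal Q A b c xs ->
  exists lam : 'cV[R]_m, (forall i, 0 <= lam i 0) /\
    (forall i, lam i 0 != 0 -> (A *m xs) i 0 = b i 0) /\
    Q *m xs + c + A^T *m lam = 0.
Proof.
move=> hQ [fx opt].
set g := Q *m xs + c.
set r := [seq i <- enum 'I_m | (A *m xs) i 0 == b i 0].
have [h|[d [hd hg]]] := @farkas_n R n _ (map rowv r) (- g) erefl.
  have [lam [l0 [lr e]]] := incone_lam h.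
  exists lam; split => //; split.
    by move=> i /lr; rewrite mem_filter => /andP[/eqP -> _].
  by rewrite -e subrr.
exfalso.
rewrite dotNl oppr_gt0 in hg.
have hact i : (A *m xs) i 0 = b i 0 -> (A *m d) i 0 <= 0.
  move=> hi; rewrite -dot_rowv; apply: hd; apply: map_f.
  by rewrite mem_filter hi eqxx mem_enum.
set q := (d^T *m Q *m d) 0 0.
have q0 : 0 <= q by exact: psd.
pose h i := if 0 < (A *m d) i 0 then (b i 0 - (A *m xs) i 0) / (A *m d) i 0 else 1.
pose h0 := - dot g d / (q + 1).
have ph i : 0 < h i.
  rewrite /h; case: ifP => pos //.
  apply: divr_gt0 => //; rewrite subr_gt0 lt_def fx andbT.
  apply/eqP => E; have := hact i (esym E); rewrite leNgt pos //.
have ph0 : 0 < h0 by rewrite /h0 divr_gt0 ?oppr_gt0 //; lra.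
have [e [e0 eh ei]] := min_pos ph0 ph.
have fy : qp_feasible A b (xs + e *: d).
  move=> i; rewrite AmxDZ; have := ei i; rewrite /h.
  case: ifP => pos.
    rewrite ler_pdivlMr // => H; have := fx i; lra.
  move=> _; have := fx i; move/negbT: pos; rewrite -leNgt => pos.
  have : e * (A *m d) i 0 <= 0 by rewrite mulr_ge0_le0 // ltW.
  lra.
have := opt _ fy; rewrite obj_expand; last by case: hQ.
rewrite -/g -/q => H.
have H1 : h0 * q <= - dot g d.
  rewrite /h0 mulrAC -mulrA ger_pMr ?oppr_gt0 //.
  by rewrite ler_pdivrMr; lra.
have H2 : e * q <= - dot g d.
  apply: le_trans H1; exact: ler_wpM2r.
have H3 : e * (e * q) <= e * (- dot g d) by rewrite ler_wpM2l // ltW.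
have H4 : e * dot g d < 0 by rewrite pmulr_rlt0.
have H5 : e ^+ 2 / 2 * q = e * (e * q) / 2 by rewrite expr2; field.
rewrite H5 in H.
have H6 : e * (- dot g d) = - (e * dot g d) by rewrite mulrN.
lra.
Qed.

End KKT.

Lemma eB (R : realType) p q (M N : 'M[R]_(p, q)) i j : (M - N) i j = M i j - N i j.
Proof. by rewrite !mxE. Qed.
Lemma eD (R : realType) p q (M N : 'M[R]_(p, q)) i j : (M + N) i j = M i j + N i j.
Proof. by rewrite !mxE. Qed.
Lemma eZ (R : realType) p q (M : 'M[R]_(p, q)) a i j : (a *: M) i j = a * M i j.
Proof. by rewrite !mxE. Qed.
Unset Implicit Arguments.

Theorem proposition3 (R : realType) (m n : nat) (hm : (1 <= m)%N) (hn : (1 <= n)%N)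
  (Q : 'M[R]_n) (A : 'M[R]_(m, n)) (b : 'cV[R]_m) (c : 'cV[R]_n)
  (xs : 'cV[R]_n) (mbar nbar : nat) (hmbar : (mbar <= m)%N) (hnbar : (nbar <= n)%N) :
  sym_posdef Q ->
  qp_optimal Q A b c xs ->
  (mbar < m)%N ->
  forall delta : 'cV[R]_m,
    (* delta is the zero-extension of a vector of R^(m - mbar) indexed by rows mbar..m-1 *)
    (forall i : 'I_m, (i < mbar)%N -> delta i 0 = 0) ->
    delta != 0 ->
    (forall i : 'I_m, 0 <= delta i 0) ->
    (* A21^T delta = 0 *)
    (forall j : 'I_n, (j < nbar)%N -> \sum_(i < m) A i j * delta i 0 = 0) ->
    (exists (b' : 'cV[R]_m) (c' : 'cV[R]_n),
        b' != b /\
        (forall i : 'I_m, (i < mbar)%N -> b' i 0 = b i 0) /\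
        (forall j : 'I_n, (j < nbar)%N -> c' j 0 = c j 0) /\
        qp_optimal Q A b' c' xs)
    /\
    ((nbar < n)%N ->
     (* A22^T delta <> 0 *)
     (exists j : 'I_n, (nbar <= j)%N /\ \sum_(i < m) A i j * delta i 0 != 0) ->
     exists (c' : 'cV[R]_n) (b' : 'cV[R]_m),
        c' != c /\
        (forall i : 'I_m, (i < mbar)%N -> b' i 0 = b i 0) /\
        (forall j : 'I_n, (j < nbar)%N -> c' j 0 = c j 0) /\
        qp_optimal Q A b' c' xs).
Proof.
move=> hQ hopt hmb delta d0 dnz dge dA21.
have [lam [l0 [cs st]]] := kkt_nec hQ hopt.
have [fx _] := hopt.
have [i0 pi0] : exists i0, 0 < delta i0 0.
  have [i ni] : exists i, delta i 0 != 0.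
    apply/existsP; apply: contraR dnz => /existsPn H.
    apply/eqP/matrixP => i j; rewrite (ord1 j) mxE; exact/eqP/negPn/H.
  by exists i; rewrite lt_def ni dge.
have [k pk kmin] := arg_minP (fun i => lam i 0 / delta i 0) (P := fun i => 0 < delta i 0) pi0.
have kge : (mbar <= k)%N.
  by rewrite leqNgt; apply/negP => /d0 e; rewrite e ltxx in pk.
set X := Q *m xs. set Y := A^T *m delta. set Z := A^T *m lam.
split.
- set t := lam k 0 / delta k 0.
  have t0 : 0 <= t by rewrite divr_ge0 ?l0 // ltW.
  have hl' i : 0 <= lam i 0 - t * delta i 0.
    case: (ltrP 0 (delta i 0)) => pos.
      have := kmin i pos; rewrite ler_pdivlMr // => H; rewrite -/t in H; lra.
    have -> : delta i 0 = 0 by apply/le_anti; rewrite pos dge.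
    by rewrite mulr0 subr0.
  exists (b + delta_mx k 0), (c + t *: Y).
  split.
    apply/eqP => /matrixP/(_ k 0); rewrite !mxE !eqxx /=; lra.
  split.
    move=> i hi; rewrite !mxE.
    have ne : i != k by apply/eqP => e; rewrite e ltnNge kge in hi.
    by rewrite (negbTE ne) /= addr0.
  split.
    move=> j hj; rewrite /Y !mxE.
    have := dA21 j hj => E.
    rewrite (eq_bigr (fun i => A i j * delta i 0)) ?E ?mulr0 ?addr0 // => i _.
    by rewrite mxE.
  apply: (kkt_suff (lam := lam - t *: delta)) => //.
  + move=> i; have := fx i; rewrite [(b + _) i 0]mxE [delta_mx _ _ _ _]mxE.
    by case: (_ && _); rewrite ?mulr1n ?mulr0n => H; lra.
  + by move=> i; rewrite !mxE.
  + move=> i; rewrite eB eZ eD [delta_mx _ _ _ _]mxE; case: (eqVneq i k) => [->|ne].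
      have -> : t * delta k 0 = lam k 0 by rewrite /t divfK // gt_eqF.
      by rewrite subrr eqxx => /negP.
    rewrite /= addr0 => nz; apply: cs.
    apply/eqP => l0i; move: nz (hl' i); rewrite l0i => nz h.
    have : 0 <= t * delta i 0 by rewrite mulr_ge0.
    move: nz; rewrite sub0r => /eqP nz.
    by move=> h2; apply: nz; lra.
  + rewrite mulmxBr -scalemxAr -/Z -/Y.
    move: st; rewrite -/X -/Z; clearbody X Y Z => st.
    apply/matrixP => i j; move/matrixP/(_ i j): st.
    rewrite !mxE => E; lra.
- move=> hnb [j [hj hjn]].
  exists (c - Y), (\col_i (if delta i 0 == 0 then b i 0 else (A *m xs) i 0)).
  have hY j0 : Y j0 0 = \sum_(i < m) A i j0 * delta i 0.
    by rewrite /Y mxE; apply: eq_bigr => i _; rewrite mxE.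
  split.
    apply/eqP => /matrixP/(_ j 0).
    rewrite eB hY => E2.
    by move/eqP: hjn; apply; lra.
  split.
    by move=> i hi; rewrite mxE d0 // eqxx.
  split.
    move=> j0 hj0; rewrite eB hY dA21 //; lra.
  apply: (kkt_suff (lam := lam + delta)) => //.
  + by move=> i; rewrite mxE; case: ifP => _ //; exact: fx.
  + by move=> i; rewrite mxE addr_ge0.
  + move=> i; rewrite eD [(\col_i0 _) i 0]mxE.
    case: (eqVneq (delta i 0) 0) => [E|ne].
      by rewrite E addr0 => /cs.
    by [].
  + rewrite mulmxDr -/Z -/Y.
    move: st; rewrite -/X -/Z; clearbody X Y Z => st.
    apply/matrixP => i j0; move/matrixP/(_ i j0): st.
    rewrite !mxE => E; lra.
Qed.
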